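(* Let $N$ be a $4$-dimensional Lorentzian space form of constant sectional curvature $L_0$, with metric $h$ and Levi-Civita connection $\nabla$. Let $M$ be a Lorentz surface and $F:M\to N$ a time-like conformal immersion. Let $(u,v)$ be local coordinates compatible with the paracomplex structure of $M$, so that the induced metric is $e^{2\lambda}(du^2-dv^2)$. Put $T_1=dF(\partial/\partial u)$, $T_2=dF(\partial/\partial v)$ and let $N_1,N_2$ be normal vector fields with $h(N_1,N_1)=h(N_2,N_2)=e^{2\lambda}$, $h(N_1,N_2)=0$. Define real functions $\alpha_k,\beta_k$ ($k=1,2,3$), $\mu_1,\mu_2$ by $$\sigma(T_1,T_1)=\alpha_1N_1+\beta_1N_2,\quad\sigma(T_1,T_2)=\alpha_2N_1+\beta_2N_2,\quad\sigma(T_2,T_2)=\alpha_3N_1+\beta_3N_2,$$ $$\nabla^\perp_{\partial/\partial u}N_1=\lambda_uN_1+\mu_1N_2,\qquad \nabla^\perp_{\partial/\partial v}N_1=\lambda_vN_1+\mu_2N_2,$$ with $\sigma$ the second fundamental form and $\nabla^\perp$ the normal connection. Set $$W=\alpha_2+\sqrt{-1}\beta_1,\quad X=\alpha_2+\sqrt{-1}\beta_3,\quad Y=\beta_2-\sqrt{-1}\alpha_1,\quad Z=\beta_2-\sqrt{-1}\alpha_3,$$ $$\phi=\lambda_u-\sqrt{-1}\mu_2,\qquad\psi=\lambda_v-\sqrt{-1}\mu_1.$$ Then $W+\overline{W}=X+\overline{X}$, $Y+\overline{Y}=Z+\overline{Z}$, $$WX+YZ+L_0e^{2\lambda}+\phi_u-\psi_v=0,$$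 and $$Y_v+\sqrt{-1}X_u=-\sqrt{-1}W\phi-Z\psi,\qquad W_v-\sqrt{-1}Z_u=\sqrt{-1}Y\phi-X\psi.$$
   Context: A time-like immersion is one whose induced metric is Lorentzian. All objects are smooth; subscripts $u,v$ denote partial derivatives. *)

(* Defs.v *)
From Stdlib Require Import Reals Lra List.
From Coquelicot Require Import Coquelicot.
Open Scope R_scope.

Definition du (f : R -> R -> R) : R -> R -> R := fun u v => Derive (fun t => f t v) u.
Definition dv (f : R -> R -> R) : R -> R -> R := fun u v => Derive (fun t => f u t) v.

Fixpoint pdn (ds : list bool) (f : R -> R -> R) : R -> R -> R :=
  match ds with
  | nil => f
  | b :: ds' => (if b then du else dv) (pdn ds' f)
  end.

Definition open2 (U : R -> R -> Prop) : Prop :=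
  forall u v, U u v -> exists eps, 0 < eps /\
    forall u' v', Rabs (u' - u) < eps -> Rabs (v' - v) < eps -> U u' v'.

Definition smooth_on (U : R -> R -> Prop) (f : R -> R -> R) : Prop :=
  forall (ds : list bool) u v, U u v ->
    ex_derive (fun t => pdn ds f t v) u /\
    ex_derive (fun t => pdn ds f u t) v /\
    continuous (fun p : R * R => pdn ds f (fst p) (snd p)) (u, v).

(** Vectors of R^5 are functions [nat -> R]; only components 0..4 matter. *)
Definition vec := nat -> R.

Definition sgnR (x : R) : R :=
  match Rlt_dec 0 x with
  | left _ => 1
  | right _ => match Rlt_dec x 0 with left _ => -1 | right _ => 0 end
  end.

(** L0 > 0 : R^5_1, N = de Sitter space  {eta(x,x) = 1/L0}.
    L0 < 0 : R^5_2, N = anti-de Sitter space {eta(x,x) = 1/L0}.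
    L0 = 0 : N = Minkowski space R^4_1 = {x4 = 0}. *)
Definition eta (L0 : R) (x y : vec) : R :=
  - x 0%nat * y 0%nat + x 1%nat * y 1%nat + x 2%nat * y 2%nat + x 3%nat * y 3%nat
  + sgnR L0 * x 4%nat * y 4%nat.

Definition inN (L0 : R) (x : vec) : Prop :=
  (L0 = 0 -> x 4%nat = 0) /\ (L0 <> 0 -> eta L0 x x = / L0).

Definition tangentN (L0 : R) (x w : vec) : Prop :=
  (L0 = 0 -> w 4%nat = 0) /\ (L0 <> 0 -> eta L0 x w = 0).

(** Levi-Civita connection of N: the covariant derivative along a curve through x
    whose ambient derivative is w is the tangential projection of w
    (for L0 <> 0, the normal of the quadric is x with eta(x,x)=1/L0;
     for L0 = 0 this is w itself). *)
Definition nablaN (L0 : R) (x w : vec) : vec :=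
  fun i => w i - L0 * eta L0 w x * x i.

Definition vfield := R -> R -> vec.

Definition duV (X : vfield) : vfield := fun u v i => du (fun a b => X a b i) u v.
Definition dvV (X : vfield) : vfield := fun u v i => dv (fun a b => X a b i) u v.

Definition vlin (a : R) (x : vec) (b : R) (y : vec) : vec := fun i => a * x i + b * y i.
Definition vsub (x y : vec) : vec := fun i => x i - y i.

Definition tangent_surf (T1 T2 w : vec) : Prop :=
  exists a b : R, forall i, (i < 5)%nat -> w i = a * T1 i + b * T2 i.

(** [sigma_is L0 F T1 T2 DT n] : the normal component (second fundamental form)
    of the covariant derivative nabla_{DT} at F equals n, i.e.
    nabla - n is tangent to the surface (n itself being normal). *)
Definition normal_part_is (L0 : R) (x T1 T2 Dw n : vec) : Prop :=
  tangent_surf T1 T2 (vsub (nablaN L0 x Dw) n).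

Definition cfun := R -> R -> C.
Definition mkC (f g : R -> R -> R) : cfun := fun u v => (f u v, g u v).
Definition duC (f : cfun) : cfun :=
  fun u v => (du (fun a b => fst (f a b)) u v, du (fun a b => snd (f a b)) u v).
Definition dvC (f : cfun) : cfun :=
  fun u v => (dv (fun a b => fst (f a b)) u v, dv (fun a b => snd (f a b)) u v).

(* Main.v *)
Require Import Defs.
From Stdlib Require Import Reals Lra Lia List.
From Coquelicot Require Import Coquelicot.
Open Scope R_scope.

Lemma pdn_app ds b f : pdn (ds ++ b :: nil) f = pdn ds ((if b then du else dv) f).
Proof. induction ds as [|c ds IH]; simpl; [reflexivity| now rewrite IH]. Qed.

Lemma smooth_du U f : smooth_on U f -> smooth_on U (du f).
Proof. intros H ds x y Hx. rewrite <- (pdn_app ds true). now apply H. Qed.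
Lemma smooth_dv U f : smooth_on U f -> smooth_on U (dv f).
Proof. intros H ds x y Hx. rewrite <- (pdn_app ds false). now apply H. Qed.

Lemma sm_exu U f x y : smooth_on U f -> U x y -> ex_derive (fun t => f t y) x.
Proof. intros H Hx. exact (proj1 (H nil x y Hx)). Qed.
Lemma sm_exv U f x y : smooth_on U f -> U x y -> ex_derive (fun t => f x t) y.
Proof. intros H Hx. exact (proj1 (proj2 (H nil x y Hx))). Qed.

Lemma schwarz_U U f x y : open2 U -> smooth_on U f -> U x y -> du (dv f) x y = dv (du f) x y.
Proof.
  intros HU Hs Hxy. unfold du, dv. apply Schwarz.
  - destruct (HU x y Hxy) as [eps [He Hb]]. exists (mkposreal eps He). simpl.
    intros a b Ha Hb'. specialize (Hb a b Ha Hb').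
    split; [exact (sm_exu U f a b Hs Hb)|].
    split; [exact (sm_exv U f a b Hs Hb)|].
    split; [exact (sm_exu U (dv f) a b (smooth_dv U f Hs) Hb)|].
    exact (sm_exv U (du f) a b (smooth_du U f Hs) Hb).
  - apply continuity_2d_pt_filterlim. exact (proj2 (proj2 (Hs (true :: false :: nil) x y Hxy))).
  - apply continuity_2d_pt_filterlim. exact (proj2 (proj2 (Hs (false :: true :: nil) x y Hxy))).
Qed.

Lemma du_ext U f g x y : open2 U -> U x y -> (forall a b, U a b -> f a b = g a b) -> du f x y = du g x y.
Proof.
  intros HU Hxy H. unfold du. apply Derive_ext_loc.
  destruct (HU x y Hxy) as [eps [He Hb]]. exists (mkposreal eps He). simpl.
  intros t Ht. apply H. apply Hb. exact Ht. rewrite Rminus_eq_0, Rabs_R0. exact He.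
Qed.
Lemma dv_ext U f g x y : open2 U -> U x y -> (forall a b, U a b -> f a b = g a b) -> dv f x y = dv g x y.
Proof.
  intros HU Hxy H. unfold dv. apply Derive_ext_loc.
  destruct (HU x y Hxy) as [eps [He Hb]]. exists (mkposreal eps He). simpl.
  intros t Ht. apply H. apply Hb. rewrite Rminus_eq_0, Rabs_R0. exact He. exact Ht.
Qed.

Lemma D_eta5 (s : R) (p0 p1 p2 p3 p4 q0 q1 q2 q3 q4 : R -> R) x :
  ex_derive p0 x -> ex_derive p1 x -> ex_derive p2 x -> ex_derive p3 x -> ex_derive p4 x ->
  ex_derive q0 x -> ex_derive q1 x -> ex_derive q2 x -> ex_derive q3 x -> ex_derive q4 x ->
  Derive (fun t => - p0 t * q0 t + p1 t * q1 t + p2 t * q2 t + p3 t * q3 t + s * p4 t * q4 t) x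
  = - Derive (fun t => p0 t) x * q0 x + Derive (fun t => p1 t) x * q1 x + Derive (fun t => p2 t) x * q2 x + Derive (fun t => p3 t) x * q3 x + s * Derive (fun t => p4 t) x * q4 x
  + (- p0 x * Derive (fun t => q0 t) x + p1 x * Derive (fun t => q1 t) x + p2 x * Derive (fun t => q2 t) x + p3 x * Derive (fun t => q3 t) x + s * p4 x * Derive (fun t => q4 t) x).
Proof.
  intros. apply is_derive_unique. auto_derive. repeat split; assumption. ring.
Qed.

Lemma du_eta L0 (P Q : vfield) x y :
  (forall i, ex_derive (fun t => P t y i) x) -> (forall i, ex_derive (fun t => Q t y i) x) ->
  du (fun a b => eta L0 (P a b) (Q a b)) x y = eta L0 (duV P x y) (Q x y) + eta L0 (P x y) (duV Q x y).
Proof.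
  intros HP HQ. unfold du, duV, du, eta.
  exact (D_eta5 (sgnR L0) (fun t => P t y 0%nat) (fun t => P t y 1%nat) (fun t => P t y 2%nat)
     (fun t => P t y 3%nat) (fun t => P t y 4%nat)
     (fun t => Q t y 0%nat) (fun t => Q t y 1%nat) (fun t => Q t y 2%nat)
     (fun t => Q t y 3%nat) (fun t => Q t y 4%nat) x
     (HP _) (HP _) (HP _) (HP _) (HP _) (HQ _) (HQ _) (HQ _) (HQ _) (HQ _)).
Qed.
Lemma dv_eta L0 (P Q : vfield) x y :
  (forall i, ex_derive (fun t => P x t i) y) -> (forall i, ex_derive (fun t => Q x t i) y) ->
  dv (fun a b => eta L0 (P a b) (Q a b)) x y = eta L0 (dvV P x y) (Q x y) + eta L0 (P x y) (dvV Q x y).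
Proof.
  intros HP HQ. unfold dv, dvV, dv, eta.
  exact (D_eta5 (sgnR L0) (fun t => P x t 0%nat) (fun t => P x t 1%nat) (fun t => P x t 2%nat)
     (fun t => P x t 3%nat) (fun t => P x t 4%nat)
     (fun t => Q x t 0%nat) (fun t => Q x t 1%nat) (fun t => Q x t 2%nat)
     (fun t => Q x t 3%nat) (fun t => Q x t 4%nat) y
     (HP _) (HP _) (HP _) (HP _) (HP _) (HQ _) (HQ _) (HQ _) (HQ _) (HQ _)).
Qed.

Lemma D_cexp c (l h : R -> R) x : ex_derive l x -> ex_derive h x ->
  Derive (fun t => c * exp (2 * l t) * h t) x = c * (2 * Derive (fun t => l t) x * exp (2 * l x) * h x + exp (2 * l x) * Derive (fun t => h t) x).
Proof. intros. apply is_derive_unique. auto_derive. repeat split; assumption. ring. Qed.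

Lemma du_cexp c (l h : R -> R -> R) x y : ex_derive (fun t => l t y) x -> ex_derive (fun t => h t y) x ->
  du (fun a b => c * exp (2 * l a b) * h a b) x y = c * (2 * du l x y * exp (2 * l x y) * h x y + exp (2 * l x y) * du h x y).
Proof. intros. unfold du. exact (D_cexp c (fun t => l t y) (fun t => h t y) x H H0). Qed.
Lemma dv_cexp c (l h : R -> R -> R) x y : ex_derive (fun t => l x t) y -> ex_derive (fun t => h x t) y ->
  dv (fun a b => c * exp (2 * l a b) * h a b) x y = c * (2 * dv l x y * exp (2 * l x y) * h x y + exp (2 * l x y) * dv h x y).
Proof. intros. unfold dv. exact (D_cexp c (fun t => l x t) (fun t => h x t) y H H0). Qed.

Lemma diff_u L0 U (P Q : vfield) c l h x y : open2 U -> U x y ->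
  (forall i, ex_derive (fun t => P t y i) x) -> (forall i, ex_derive (fun t => Q t y i) x) ->
  ex_derive (fun t => l t y) x -> ex_derive (fun t => h t y) x ->
  (forall a b, U a b -> eta L0 (P a b) (Q a b) = c * exp (2 * l a b) * h a b) ->
  eta L0 (duV P x y) (Q x y) + eta L0 (P x y) (duV Q x y)
  = c * (2 * du l x y * exp (2 * l x y) * h x y + exp (2 * l x y) * du h x y).
Proof.
  intros HU Hxy HP HQ Hl Hh H. rewrite <- du_eta by assumption. rewrite <- du_cexp by assumption.
  apply (du_ext U); assumption.
Qed.
Lemma diff_v L0 U (P Q : vfield) c l h x y : open2 U -> U x y ->
  (forall i, ex_derive (fun t => P x t i) y) -> (forall i, ex_derive (fun t => Q x t i) y) ->
  ex_derive (fun t => l x t) y -> ex_derive (fun t => h x t) y ->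
  (forall a b, U a b -> eta L0 (P a b) (Q a b) = c * exp (2 * l a b) * h a b) ->
  eta L0 (dvV P x y) (Q x y) + eta L0 (P x y) (dvV Q x y)
  = c * (2 * dv l x y * exp (2 * l x y) * h x y + exp (2 * l x y) * dv h x y).
Proof.
  intros HU Hxy HP HQ Hl Hh H. rewrite <- dv_eta by assumption. rewrite <- dv_cexp by assumption.
  apply (dv_ext U); assumption.
Qed.

Lemma eta_sym L0 x y : eta L0 x y = eta L0 y x.
Proof. unfold eta; ring. Qed.
Lemma eta_ext L0 x x' y : (forall i, (i < 5)%nat -> x i = x' i) -> eta L0 x y = eta L0 x' y.
Proof. intros H. unfold eta. rewrite !H by lia. reflexivity. Qed.

Lemma expand L0 x T1 T2 w a N1 b N2 :
  normal_part_is L0 x T1 T2 w (vlin a N1 b N2) ->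
  exists A B, forall z, eta L0 w z = A * eta L0 T1 z + B * eta L0 T2 z + a * eta L0 N1 z + b * eta L0 N2 z
     + L0 * eta L0 w x * eta L0 x z.
Proof.
  intros [A [B H]]. exists A, B. intros z.
  unfold vsub, nablaN, vlin in H. set (k := eta L0 w x) in *.
  assert (E : forall i, (i < 5)%nat -> w i = A * T1 i + B * T2 i + a * N1 i + b * N2 i + L0 * k * x i).
  { intros i Hi. specialize (H i Hi). lra. }
  unfold eta at 1. rewrite !E by lia. unfold eta. ring.
Qed.

Definition vsm U (P : vfield) := forall i, smooth_on U (fun a b => P a b i).
Lemma vsm_du U P : vsm U P -> vsm U (duV P).
Proof. intros H i. exact (smooth_du U _ (H i)). Qed.
Lemma vsm_dv U P : vsm U P -> vsm U (dvV P).
Proof. intros H i. exact (smooth_dv U _ (H i)). Qed.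
Lemma vexu U P x y : vsm U P -> U x y -> forall i, ex_derive (fun t => P t y i) x.
Proof. intros H Hx i. exact (sm_exu U _ x y (H i) Hx). Qed.
Lemma vexv U P x y : vsm U P -> U x y -> forall i, ex_derive (fun t => P x t i) y.
Proof. intros H Hx i. exact (sm_exv U _ x y (H i) Hx). Qed.
Lemma du_const c x y : du (fun _ _ => c) x y = 0.
Proof. unfold du. apply Derive_const. Qed.
Lemma dv_const c x y : dv (fun _ _ => c) x y = 0.
Proof. unfold dv. apply Derive_const. Qed.

Lemma frame_expand L0 x T1 T2 N1 N2 e w a b :
 e <> 0 ->
 eta L0 T1 T1 = e -> eta L0 T2 T2 = -e -> eta L0 T1 T2 = 0 ->
 eta L0 N1 T1 = 0 -> eta L0 N1 T2 = 0 -> eta L0 N2 T1 = 0 -> eta L0 N2 T2 = 0 ->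
 eta L0 N1 N1 = e -> eta L0 N2 N2 = e -> eta L0 N1 N2 = 0 ->
 L0 * eta L0 x T1 = 0 -> L0 * eta L0 x T2 = 0 -> L0 * eta L0 x N1 = 0 -> L0 * eta L0 x N2 = 0 ->
 normal_part_is L0 x T1 T2 w (vlin a N1 b N2) ->
 (forall z, eta L0 w z = eta L0 w T1 / e * eta L0 T1 z - eta L0 w T2 / e * eta L0 T2 z
     + a * eta L0 N1 z + b * eta L0 N2 z + L0 * eta L0 w x * eta L0 x z)
 /\ eta L0 w N1 = a * e /\ eta L0 w N2 = b * e.
Proof.
  intros He H11 H22 H12 HN1T1 HN1T2 HN2T1 HN2T2 HN11 HN22 HN12 HxT1 HxT2 HxN1 HxN2 Hn.
  destruct (expand L0 x T1 T2 w a N1 b N2 Hn) as [A [B H]].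
  assert (R1 : forall k q, L0 * k * q = k * (L0 * q)) by (intros; ring).
  pose proof (H T1) as E1. pose proof (H T2) as E2. pose proof (H N1) as E3. pose proof (H N2) as E4.
  rewrite R1 in E1, E2, E3, E4. rewrite HxT1 in E1. rewrite HxT2 in E2. rewrite HxN1 in E3. rewrite HxN2 in E4.
  rewrite (eta_sym L0 T2 T1), H12, H11, HN1T1, HN2T1 in E1.
  rewrite H12, H22, HN1T2, HN2T2 in E2.
  rewrite (eta_sym L0 T1 N1), HN1T1, (eta_sym L0 T2 N1), HN1T2, HN11, (eta_sym L0 N2 N1), HN12 in E3.
  rewrite (eta_sym L0 T1 N2), HN2T1, (eta_sym L0 T2 N2), HN2T2, HN22, HN12 in E4.
  split; [|split; lra].
  intros z. rewrite (H z). rewrite E1, E2. field. exact He.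
Qed.

Lemma du_opp (f : R -> R -> R) x y : du (fun a b => - f a b) x y = - du f x y.
Proof. unfold du. apply Derive_opp. Qed.
Lemma dv_opp (f : R -> R -> R) x y : dv (fun a b => - f a b) x y = - dv f x y.
Proof. unfold dv. apply Derive_opp. Qed.
Lemma symf L0 x y c : eta L0 x y = c -> eta L0 y x = c.
Proof. intros H. rewrite eta_sym. exact H. Qed.

From Stdlib Require Import Lra Lia List.
From Stdlib Require Import Reals.
From Coquelicot Require Import Coquelicot.
Open Scope R_scope.

Ltac vsmt := repeat match goal with |- vsm _ (duV _) => apply vsm_du | |- vsm _ (dvV _) => apply vsm_dv end; assumption.
Ltac smt := repeat match goal with |- smooth_on _ (du _) => apply smooth_du | |- smooth_on _ (dv _) => apply smooth_dv end; assumption.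
Ltac exd U Hab := lazymatch goal with
 | |- forall i, ex_derive (fun t => ?P t ?b i) ?a => exact (vexu U P a b ltac:(vsmt) Hab)
 | |- forall i, ex_derive (fun t => ?P ?a t i) ?b => exact (vexv U P a b ltac:(vsmt) Hab)
 | |- ex_derive (fun t => (fun _ _ => _) t _) _ => apply ex_derive_const
 | |- ex_derive (fun t => (fun _ _ => _) _ t) _ => apply ex_derive_const
 | |- ex_derive (fun t => ?f t ?b) ?a => exact (sm_exu U f a b ltac:(smt) Hab)
 | |- ex_derive (fun t => ?f ?a t) ?b => exact (sm_exv U f a b ltac:(smt) Hab)
 | |- ex_derive _ _ => apply ex_derive_const
 end.
Ltac spec4 U Hab Hd := match type of Hd with ?A1 -> ?A2 -> ?A3 -> ?A4 -> _ =>
  let h1 := fresh in let h2 := fresh in let h3 := fresh in let h4 := fresh in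
  assert (h1 : A1) by exd U Hab; assert (h2 : A2) by exd U Hab; assert (h3 : A3) by exd U Hab; assert (h4 : A4) by exd U Hab;
  specialize (Hd h1 h2 h3 h4); clear h1 h2 h3 h4 end.
Ltac dU L0 U HU P Q c l h a b Hab := let Hd := fresh "D" in pose proof (diff_u L0 U P Q c l h a b HU Hab) as Hd; spec4 U Hab Hd.
Ltac dV L0 U HU P Q c l h a b Hab := let Hd := fresh "D" in pose proof (diff_v L0 U P Q c l h a b HU Hab) as Hd; spec4 U Hab Hd.

Ltac idt D tac := specialize (D ltac:(intros ? ? ?; cbv beta; tac; ring)).
Ltac cln D := rewrite ?du_const, ?dv_const in D; cbv beta in D.

Theorem proposition7p1
  (L0 : R) (U : R -> R -> Prop) (F N1 N2 : vfield)
  (lam a1 a2 a3 b1 b2 b3 mu1 mu2 : R -> R -> R) :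
  open2 U ->
  (* all objects smooth *)
  (forall i, smooth_on U (fun u v => F u v i)) ->
  (forall i, smooth_on U (fun u v => N1 u v i)) ->
  (forall i, smooth_on U (fun u v => N2 u v i)) ->
  smooth_on U lam ->
  smooth_on U a1 -> smooth_on U a2 -> smooth_on U a3 ->
  smooth_on U b1 -> smooth_on U b2 -> smooth_on U b3 ->
  smooth_on U mu1 -> smooth_on U mu2 ->
  (* F maps U into the space form N *)
  (forall u v, U u v -> inN L0 (F u v)) ->
  (* time-like conformal immersion, induced metric e^{2 lam}(du^2 - dv^2) *)
  (forall u v, U u v ->
     eta L0 (duV F u v) (duV F u v) = exp (2 * lam u v) /\
     eta L0 (dvV F u v) (dvV F u v) = - exp (2 * lam u v) /\
     eta L0 (duV F u v) (dvV F u v) = 0) ->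
  (* N1, N2 normal vector fields *)
  (forall u v, U u v ->
     tangentN L0 (F u v) (N1 u v) /\ tangentN L0 (F u v) (N2 u v) /\
     eta L0 (N1 u v) (duV F u v) = 0 /\ eta L0 (N1 u v) (dvV F u v) = 0 /\
     eta L0 (N2 u v) (duV F u v) = 0 /\ eta L0 (N2 u v) (dvV F u v) = 0 /\
     eta L0 (N1 u v) (N1 u v) = exp (2 * lam u v) /\
     eta L0 (N2 u v) (N2 u v) = exp (2 * lam u v) /\
     eta L0 (N1 u v) (N2 u v) = 0) ->
  (* second fundamental form *)
  (forall u v, U u v ->
     normal_part_is L0 (F u v) (duV F u v) (dvV F u v) (duV (duV F) u v)
       (vlin (a1 u v) (N1 u v) (b1 u v) (N2 u v)) /\
     normal_part_is L0 (F u v) (duV F u v) (dvV F u v) (duV (dvV F) u v)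
       (vlin (a2 u v) (N1 u v) (b2 u v) (N2 u v)) /\
     normal_part_is L0 (F u v) (duV F u v) (dvV F u v) (dvV (dvV F) u v)
       (vlin (a3 u v) (N1 u v) (b3 u v) (N2 u v))) ->
  (* normal connection *)
  (forall u v, U u v ->
     normal_part_is L0 (F u v) (duV F u v) (dvV F u v) (duV N1 u v)
       (vlin (du lam u v) (N1 u v) (mu1 u v) (N2 u v)) /\
     normal_part_is L0 (F u v) (duV F u v) (dvV F u v) (dvV N1 u v)
       (vlin (dv lam u v) (N1 u v) (mu2 u v) (N2 u v))) ->
  let W := mkC a2 b1 in
  let X := mkC a2 b3 in
  let Y := mkC b2 (fun u v => - a1 u v) in
  let Z := mkC b2 (fun u v => - a3 u v) in
  let phi := mkC (du lam) (fun u v => - mu2 u v) in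
  let psi := mkC (dv lam) (fun u v => - mu1 u v) in
  forall u v, U u v ->
    (W u v + Cconj (W u v) = X u v + Cconj (X u v))%C /\
    (Y u v + Cconj (Y u v) = Z u v + Cconj (Z u v))%C /\
    (W u v * X u v + Y u v * Z u v + RtoC (L0 * exp (2 * lam u v))
       + duC phi u v - dvC psi u v = 0)%C /\
    (dvC Y u v + Ci * duC X u v = - Ci * W u v * phi u v - Z u v * psi u v)%C /\
    (dvC W u v - Ci * duC Z u v = Ci * Y u v * phi u v - X u v * psi u v)%C.
Proof.
  intros HU HF HN1 HN2 Hlam Ha1 Ha2 Ha3 Hb1 Hb2 Hb3 Hmu1 Hmu2 HinN Hmet Hnor Hsff Hnc W X Y Z phi psi u v Huv.
  assert (VF : vsm U F) by exact HF.
  assert (VN1 : vsm U N1) by exact HN1.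
  assert (VN2 : vsm U N2) by exact HN2.
  assert (SwF : forall a b, U a b -> forall i, dvV (duV F) a b i = duV (dvV F) a b i).
  { intros a b Hab i. unfold dvV, duV. symmetry. apply (schwarz_U U); auto. }
  assert (H11 : forall a b, U a b -> eta L0 (duV F a b) (duV F a b) = exp (2 * lam a b)) by (intros a b Hab; apply (Hmet a b Hab)).
  assert (H22 : forall a b, U a b -> eta L0 (dvV F a b) (dvV F a b) = - exp (2 * lam a b)) by (intros a b Hab; apply (Hmet a b Hab)).
  assert (H12 : forall a b, U a b -> eta L0 (duV F a b) (dvV F a b) = 0) by (intros a b Hab; apply (Hmet a b Hab)).
  assert (HN1T1 : forall a b, U a b -> eta L0 (N1 a b) (duV F a b) = 0) by (intros a b Hab; apply (Hnor a b Hab)).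
  assert (HN1T2 : forall a b, U a b -> eta L0 (N1 a b) (dvV F a b) = 0) by (intros a b Hab; apply (Hnor a b Hab)).
  assert (HN2T1 : forall a b, U a b -> eta L0 (N2 a b) (duV F a b) = 0) by (intros a b Hab; apply (Hnor a b Hab)).
  assert (HN2T2 : forall a b, U a b -> eta L0 (N2 a b) (dvV F a b) = 0) by (intros a b Hab; apply (Hnor a b Hab)).
  assert (HN11 : forall a b, U a b -> eta L0 (N1 a b) (N1 a b) = exp (2 * lam a b)) by (intros a b Hab; apply (Hnor a b Hab)).
  assert (HN22 : forall a b, U a b -> eta L0 (N2 a b) (N2 a b) = exp (2 * lam a b)) by (intros a b Hab; apply (Hnor a b Hab)).
  assert (HN12 : forall a b, U a b -> eta L0 (N1 a b) (N2 a b) = 0) by (intros a b Hab; apply (Hnor a b Hab)).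
  assert (HxN1' : forall a b, U a b -> L0 <> 0 -> eta L0 (F a b) (N1 a b) = 0) by (intros a b Hab; apply (Hnor a b Hab)).
  assert (HxN2' : forall a b, U a b -> L0 <> 0 -> eta L0 (F a b) (N2 a b) = 0) by (intros a b Hab; apply (Hnor a b Hab)).
  assert (HxT1' : forall a b, U a b -> L0 <> 0 -> eta L0 (F a b) (duV F a b) = 0).
  { intros a b Hab nz. 
    dU L0 U HU F F (/L0) (fun _ _ : R => 0) (fun _ _ : R => 1) a b Hab. rename D into H.
    specialize (H ltac:(intros a' b' H'; cbv beta; rewrite (proj2 (HinN a' b' H') nz), Rmult_0_r, exp_0; ring)).
    rewrite !du_const, (eta_sym L0 (duV F a b)) in H. cbv beta in H. ring_simplify in H. lra. }

  assert (HxT2' : forall a b, U a b -> L0 <> 0 -> eta L0 (F a b) (dvV F a b) = 0).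
  { intros a b Hab nz. dV L0 U HU F F (/L0) (fun _ _ : R => 0) (fun _ _ : R => 1) a b Hab. rename D into H.
    specialize (H ltac:(intros a' b' H'; cbv beta; rewrite (proj2 (HinN a' b' H') nz), Rmult_0_r, exp_0; ring)).
    rewrite !dv_const, (eta_sym L0 (dvV F a b)) in H. cbv beta in H. ring_simplify in H. lra. }
  assert (LxT1 : forall a b, U a b -> L0 * eta L0 (F a b) (duV F a b) = 0).
  { intros a b Hab. destruct (Req_dec L0 0) as [z|nz]; [rewrite z; ring | rewrite (HxT1' a b Hab nz); ring]. }
  assert (LxT2 : forall a b, U a b -> L0 * eta L0 (F a b) (dvV F a b) = 0).
  { intros a b Hab. destruct (Req_dec L0 0) as [z|nz]; [rewrite z; ring | rewrite (HxT2' a b Hab nz); ring]. }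
  assert (LxN1 : forall a b, U a b -> L0 * eta L0 (F a b) (N1 a b) = 0).
  { intros a b Hab. destruct (Req_dec L0 0) as [z|nz]; [rewrite z; ring | rewrite (HxN1' a b Hab nz); ring]. }
  assert (LxN2 : forall a b, U a b -> L0 * eta L0 (F a b) (N2 a b) = 0).
  { intros a b Hab. destruct (Req_dec L0 0) as [z|nz]; [rewrite z; ring | rewrite (HxN2' a b Hab nz); ring]. }
  assert (En : forall a b : R, exp (2 * lam a b) <> 0) by (intros; apply Rgt_not_eq, exp_pos).
  assert (FR : forall a b, U a b -> forall w a0 b0,
    normal_part_is L0 (F a b) (duV F a b) (dvV F a b) w (vlin a0 (N1 a b) b0 (N2 a b)) ->
    (forall z, eta L0 w z = eta L0 w (duV F a b) / exp (2 * lam a b) * eta L0 (duV F a b) z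
       - eta L0 w (dvV F a b) / exp (2 * lam a b) * eta L0 (dvV F a b) z
       + a0 * eta L0 (N1 a b) z + b0 * eta L0 (N2 a b) z + L0 * eta L0 w (F a b) * eta L0 (F a b) z)
    /\ eta L0 w (N1 a b) = a0 * exp (2 * lam a b) /\ eta L0 w (N2 a b) = b0 * exp (2 * lam a b)).
  { intros a b Hab w a0 b0 Hn.
    exact (frame_expand L0 (F a b) (duV F a b) (dvV F a b) (N1 a b) (N2 a b)
      (exp (2 * lam a b)) w a0 b0 (En a b) (H11 a b Hab) (H22 a b Hab) (H12 a b Hab)
      (HN1T1 a b Hab) (HN1T2 a b Hab) (HN2T1 a b Hab) (HN2T2 a b Hab) (HN11 a b Hab) (HN22 a b Hab) (HN12 a b Hab)
      (LxT1 a b Hab) (LxT2 a b Hab) (LxN1 a b Hab) (LxN2 a b Hab) Hn). }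
  pose proof (fun a b Hab => FR a b Hab _ _ _ (proj1 (Hsff a b Hab))) as XFuu.
  pose proof (fun a b Hab => FR a b Hab _ _ _ (proj1 (proj2 (Hsff a b Hab)))) as XFuv.
  pose proof (fun a b Hab => FR a b Hab _ _ _ (proj2 (proj2 (Hsff a b Hab)))) as XFvv.
  pose proof (fun a b Hab => FR a b Hab _ _ _ (proj1 (Hnc a b Hab))) as XN1u.
  pose proof (fun a b Hab => FR a b Hab _ _ _ (proj2 (Hnc a b Hab))) as XN1v.
  cbv beta in XFuu, XFuv, XFvv, XN1u, XN1v.
  assert (S1 : forall a b, U a b -> eta L0 (duV (duV F) a b) (duV F a b) = exp (2 * lam a b) * du lam a b).
  { intros a b Hab. dU L0 U HU (duV F) (duV F) (1) lam ((fun _ _ : R => 1)) a b Hab.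
    specialize (D ltac:(intros a' b' H'; cbv beta; rewrite H11 by assumption; ring)). cln D. rewrite (eta_sym L0 (duV F a b) (duV (duV F) a b)) in D. lra. }
  assert (S2 : forall a b, U a b -> eta L0 (duV (dvV F) a b) (duV F a b) = exp (2 * lam a b) * dv lam a b).
  { intros a b Hab. dV L0 U HU (duV F) (duV F) (1) lam ((fun _ _ : R => 1)) a b Hab.
    specialize (D ltac:(intros a' b' H'; cbv beta; rewrite H11 by assumption; ring)). cln D. rewrite (eta_sym L0 (duV F a b) (dvV (duV F) a b)) in D. rewrite (eta_ext L0 (dvV (duV F) a b) (duV (dvV F) a b)) in D by (intros; apply SwF; auto). lra. }
  assert (S3 : forall a b, U a b -> eta L0 (duV (dvV F) a b) (dvV F a b) = - exp (2 * lam a b) * du lam a b).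
  { intros a b Hab. dU L0 U HU (dvV F) (dvV F) (-1) lam ((fun _ _ : R => 1)) a b Hab.
    specialize (D ltac:(intros a' b' H'; cbv beta; rewrite H22 by assumption; ring)). cln D. rewrite (eta_sym L0 (dvV F a b) (duV (dvV F) a b)) in D. lra. }
  assert (S4 : forall a b, U a b -> eta L0 (dvV (dvV F) a b) (dvV F a b) = - exp (2 * lam a b) * dv lam a b).
  { intros a b Hab. dV L0 U HU (dvV F) (dvV F) (-1) lam ((fun _ _ : R => 1)) a b Hab.
    specialize (D ltac:(intros a' b' H'; cbv beta; rewrite H22 by assumption; ring)). cln D. rewrite (eta_sym L0 (dvV F a b) (dvV (dvV F) a b)) in D. lra. }
  assert (S5 : forall a b, U a b -> eta L0 (duV (duV F) a b) (dvV F a b) = - exp (2 * lam a b) * dv lam a b).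
  { intros a b Hab. dU L0 U HU (duV F) (dvV F) (0) lam ((fun _ _ : R => 1)) a b Hab.
    specialize (D ltac:(intros a' b' H'; cbv beta; rewrite H12 by assumption; ring)). cln D. rewrite (eta_sym L0 (duV F a b) (duV (dvV F) a b)), (S2 a b Hab) in D. lra. }
  assert (S6 : forall a b, U a b -> eta L0 (dvV (dvV F) a b) (duV F a b) = exp (2 * lam a b) * du lam a b).
  { intros a b Hab. dV L0 U HU (duV F) (dvV F) (0) lam ((fun _ _ : R => 1)) a b Hab.
    specialize (D ltac:(intros a' b' H'; cbv beta; rewrite H12 by assumption; ring)). cln D. rewrite (eta_ext L0 (dvV (duV F) a b) (duV (dvV F) a b)) in D by (intros; apply SwF; auto). rewrite (S3 a b Hab), (eta_sym L0 (duV F a b) (dvV (dvV F) a b)) in D. lra. }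
  assert (P1 : eta L0 (duV N1 u v) (duV F u v) = - a1 u v * exp (2 * lam u v)).
  { dU L0 U HU (N1) (duV F) (0) lam ((fun _ _ : R => 1)) u v Huv.
    specialize (D ltac:(intros a' b' H'; cbv beta; rewrite HN1T1 by assumption; ring)). cln D. rewrite (eta_sym L0 (N1 u v) (duV (duV F) u v)), (proj1 (proj2 (XFuu u v Huv))) in D. lra. }
  assert (P2 : eta L0 (duV N1 u v) (dvV F u v) = - a2 u v * exp (2 * lam u v)).
  { dU L0 U HU (N1) (dvV F) (0) lam ((fun _ _ : R => 1)) u v Huv.
    specialize (D ltac:(intros a' b' H'; cbv beta; rewrite HN1T2 by assumption; ring)). cln D. rewrite (eta_sym L0 (N1 u v) (duV (dvV F) u v)), (proj1 (proj2 (XFuv u v Huv))) in D. lra. }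
  assert (P3 : eta L0 (dvV N1 u v) (duV F u v) = - a2 u v * exp (2 * lam u v)).
  { dV L0 U HU (N1) (duV F) (0) lam ((fun _ _ : R => 1)) u v Huv.
    specialize (D ltac:(intros a' b' H'; cbv beta; rewrite HN1T1 by assumption; ring)). cln D. rewrite (eta_sym L0 (N1 u v) (dvV (duV F) u v)), (eta_ext L0 (dvV (duV F) u v) (duV (dvV F) u v)) in D by (intros; apply SwF; auto). rewrite (proj1 (proj2 (XFuv u v Huv))) in D. lra. }
  assert (P4 : eta L0 (dvV N1 u v) (dvV F u v) = - a3 u v * exp (2 * lam u v)).
  { dV L0 U HU (N1) (dvV F) (0) lam ((fun _ _ : R => 1)) u v Huv.
    specialize (D ltac:(intros a' b' H'; cbv beta; rewrite HN1T2 by assumption; ring)). cln D. rewrite (eta_sym L0 (N1 u v) (dvV (dvV F) u v)), (proj1 (proj2 (XFvv u v Huv))) in D. lra. }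
  assert (P5 : eta L0 (duV N2 u v) (duV F u v) = - b1 u v * exp (2 * lam u v)).
  { dU L0 U HU (N2) (duV F) (0) lam ((fun _ _ : R => 1)) u v Huv.
    specialize (D ltac:(intros a' b' H'; cbv beta; rewrite HN2T1 by assumption; ring)). cln D. rewrite (eta_sym L0 (N2 u v) (duV (duV F) u v)), (proj2 (proj2 (XFuu u v Huv))) in D. lra. }
  assert (P6 : eta L0 (duV N2 u v) (dvV F u v) = - b2 u v * exp (2 * lam u v)).
  { dU L0 U HU (N2) (dvV F) (0) lam ((fun _ _ : R => 1)) u v Huv.
    specialize (D ltac:(intros a' b' H'; cbv beta; rewrite HN2T2 by assumption; ring)). cln D. rewrite (eta_sym L0 (N2 u v) (duV (dvV F) u v)), (proj2 (proj2 (XFuv u v Huv))) in D. lra. }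
  assert (P7 : eta L0 (dvV N2 u v) (duV F u v) = - b2 u v * exp (2 * lam u v)).
  { dV L0 U HU (N2) (duV F) (0) lam ((fun _ _ : R => 1)) u v Huv.
    specialize (D ltac:(intros a' b' H'; cbv beta; rewrite HN2T1 by assumption; ring)). cln D. rewrite (eta_sym L0 (N2 u v) (dvV (duV F) u v)), (eta_ext L0 (dvV (duV F) u v) (duV (dvV F) u v)) in D by (intros; apply SwF; auto). rewrite (proj2 (proj2 (XFuv u v Huv))) in D. lra. }
  assert (P8 : eta L0 (dvV N2 u v) (dvV F u v) = - b3 u v * exp (2 * lam u v)).
  { dV L0 U HU (N2) (dvV F) (0) lam ((fun _ _ : R => 1)) u v Huv.
    specialize (D ltac:(intros a' b' H'; cbv beta; rewrite HN2T2 by assumption; ring)). cln D. rewrite (eta_sym L0 (N2 u v) (dvV (dvV F) u v)), (proj2 (proj2 (XFvv u v Huv))) in D. lra. }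
  assert (P11 : eta L0 (duV N2 u v) (N2 u v) = du lam u v * exp (2 * lam u v)).
  { dU L0 U HU (N2) (N2) (1) lam ((fun _ _ : R => 1)) u v Huv.
    specialize (D ltac:(intros a' b' H'; cbv beta; rewrite HN22 by assumption; ring)). cln D. rewrite (eta_sym L0 (N2 u v) (duV N2 u v)) in D. lra. }
  assert (P12 : eta L0 (dvV N2 u v) (N2 u v) = dv lam u v * exp (2 * lam u v)).
  { dV L0 U HU (N2) (N2) (1) lam ((fun _ _ : R => 1)) u v Huv.
    specialize (D ltac:(intros a' b' H'; cbv beta; rewrite HN22 by assumption; ring)). cln D. rewrite (eta_sym L0 (N2 u v) (dvV N2 u v)) in D. lra. }
  assert (P15 : eta L0 (N1 u v) (duV N2 u v) = - mu1 u v * exp (2 * lam u v)).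
  { dU L0 U HU (N1) (N2) (0) lam ((fun _ _ : R => 1)) u v Huv.
    specialize (D ltac:(intros a' b' H'; cbv beta; rewrite HN12 by assumption; ring)). cln D. rewrite (proj2 (proj2 (XN1u u v Huv))) in D. lra. }
  assert (P16 : eta L0 (N1 u v) (dvV N2 u v) = - mu2 u v * exp (2 * lam u v)).
  { dV L0 U HU (N1) (N2) (0) lam ((fun _ _ : R => 1)) u v Huv.
    specialize (D ltac:(intros a' b' H'; cbv beta; rewrite HN12 by assumption; ring)). cln D. rewrite (proj2 (proj2 (XN1v u v Huv))) in D. lra. }
  assert (ZF1 : L0 <> 0 -> eta L0 (F u v) (duV (duV F) u v) = - exp (2 * lam u v)).
  { intro nz. dU L0 U HU F (duV F) 0 lam (fun _ _ : R => 1) u v Huv.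
    specialize (D ltac:(intros a' b' H'; cbv beta; rewrite HxT1' by assumption; ring)). cln D. rewrite (H11 u v Huv) in D. lra. }
  assert (ZF2 : L0 <> 0 -> eta L0 (F u v) (duV (dvV F) u v) = 0).
  { intro nz. dU L0 U HU F (dvV F) 0 lam (fun _ _ : R => 1) u v Huv.
    specialize (D ltac:(intros a' b' H'; cbv beta; rewrite HxT2' by assumption; ring)). cln D. rewrite (H12 u v Huv) in D. lra. }
  assert (ZF3 : L0 <> 0 -> eta L0 (F u v) (dvV (dvV F) u v) = exp (2 * lam u v)).
  { intro nz. dV L0 U HU F (dvV F) 0 lam (fun _ _ : R => 1) u v Huv.
    specialize (D ltac:(intros a' b' H'; cbv beta; rewrite HxT2' by assumption; ring)). cln D. rewrite (H22 u v Huv) in D. lra. }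
  assert (ZN1u : L0 <> 0 -> eta L0 (F u v) (duV N1 u v) = 0).
  { intro nz. dU L0 U HU F (N1) 0 lam (fun _ _ : R => 1) u v Huv.
    specialize (D ltac:(intros a' b' H'; cbv beta; rewrite HxN1' by assumption; ring)). cln D. rewrite (eta_sym L0 (duV F u v) (N1 u v)), (HN1T1 u v Huv) in D. lra. }
  assert (ZN1v : L0 <> 0 -> eta L0 (F u v) (dvV N1 u v) = 0).
  { intro nz. dV L0 U HU F (N1) 0 lam (fun _ _ : R => 1) u v Huv.
    specialize (D ltac:(intros a' b' H'; cbv beta; rewrite HxN1' by assumption; ring)). cln D. rewrite (eta_sym L0 (dvV F u v) (N1 u v)), (HN1T2 u v Huv) in D. lra. }
  assert (ZN2u : L0 <> 0 -> eta L0 (F u v) (duV N2 u v) = 0).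
  { intro nz. dU L0 U HU F (N2) 0 lam (fun _ _ : R => 1) u v Huv.
    specialize (D ltac:(intros a' b' H'; cbv beta; rewrite HxN2' by assumption; ring)). cln D. rewrite (eta_sym L0 (duV F u v) (N2 u v)), (HN2T1 u v Huv) in D. lra. }
  assert (ZN2v : L0 <> 0 -> eta L0 (F u v) (dvV N2 u v) = 0).
  { intro nz. dV L0 U HU F (N2) 0 lam (fun _ _ : R => 1) u v Huv.
    specialize (D ltac:(intros a' b' H'; cbv beta; rewrite HxN2' by assumption; ring)). cln D. rewrite (eta_sym L0 (dvV F u v) (N2 u v)), (HN2T2 u v Huv) in D. lra. }
  assert (T3a : forall i, (i < 5)%nat -> dvV (duV (duV F)) u v i = duV (duV (dvV F)) u v i).
  { intros i _. set (G := fun a b => F a b i).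
    assert (SG : smooth_on U G) by exact (HF i).
    change (dv (du (du G)) u v = du (du (dv G)) u v).
    rewrite <- (schwarz_U U (du G) u v HU (smooth_du U G SG) Huv).
    apply (du_ext U); auto. intros a b Hab. symmetry. apply (schwarz_U U); auto. }
  assert (T3b : forall i, (i < 5)%nat -> dvV (duV (dvV F)) u v i = duV (dvV (dvV F)) u v i).
  { intros i _. set (G := fun a b => F a b i).
    assert (SG : smooth_on U G) by exact (HF i).
    change (dv (du (dv G)) u v = du (dv (dv G)) u v).
    symmetry. apply (schwarz_U U); auto. apply smooth_dv; auto. }
  assert (T3c : forall i, (i < 5)%nat -> dvV (duV N1) u v i = duV (dvV N1) u v i).
  { intros i _. set (G := fun a b => N1 a b i).
    assert (SG : smooth_on U G) by exact (HN1 i).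
    change (dv (du G) u v = du (dv G) u v).
    symmetry. apply (schwarz_U U); auto. }
  dV L0 U HU (duV (duV F)) (dvV F) (-1) lam (dv lam) u v Huv. rename D into G1.
  specialize (G1 ltac:(intros a' b' H'; cbv beta; rewrite S5 by assumption; ring)). cln G1.
  dU L0 U HU (duV (dvV F)) (dvV F) (-1) lam (du lam) u v Huv. rename D into G2.
  specialize (G2 ltac:(intros a' b' H'; cbv beta; rewrite S3 by assumption; ring)). cln G2.
  dV L0 U HU (duV N1) (N2) (1) lam (mu1) u v Huv. rename D into R1.
  specialize (R1 ltac:(intros a' b' H'; cbv beta; rewrite (proj2 (proj2 (XN1u _ _ H'))); ring)). cln R1.
  dU L0 U HU (dvV N1) (N2) (1) lam (mu2) u v Huv. rename D into R2.
  specialize (R2 ltac:(intros a' b' H'; cbv beta; rewrite (proj2 (proj2 (XN1v _ _ H'))); ring)). cln R2.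
  dV L0 U HU (duV (duV F)) (N1) (1) lam (a1) u v Huv. rename D into CA11.
  specialize (CA11 ltac:(intros a' b' H'; cbv beta; rewrite (proj1 (proj2 (XFuu _ _ H'))); ring)). cln CA11.
  dV L0 U HU (duV (duV F)) (N2) (1) lam (b1) u v Huv. rename D into CA12.
  specialize (CA12 ltac:(intros a' b' H'; cbv beta; rewrite (proj2 (proj2 (XFuu _ _ H'))); ring)). cln CA12.
  dU L0 U HU (duV (dvV F)) (N1) (1) lam (a2) u v Huv. rename D into CA21.
  specialize (CA21 ltac:(intros a' b' H'; cbv beta; rewrite (proj1 (proj2 (XFuv _ _ H'))); ring)). cln CA21.
  dU L0 U HU (duV (dvV F)) (N2) (1) lam (b2) u v Huv. rename D into CA22.
  specialize (CA22 ltac:(intros a' b' H'; cbv beta; rewrite (proj2 (proj2 (XFuv _ _ H'))); ring)). cln CA22.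
  dV L0 U HU (duV (dvV F)) (N1) (1) lam (a2) u v Huv. rename D into CB11.
  specialize (CB11 ltac:(intros a' b' H'; cbv beta; rewrite (proj1 (proj2 (XFuv _ _ H'))); ring)). cln CB11.
  dV L0 U HU (duV (dvV F)) (N2) (1) lam (b2) u v Huv. rename D into CB12.
  specialize (CB12 ltac:(intros a' b' H'; cbv beta; rewrite (proj2 (proj2 (XFuv _ _ H'))); ring)). cln CB12.
  dU L0 U HU (dvV (dvV F)) (N1) (1) lam (a3) u v Huv. rename D into CB21.
  specialize (CB21 ltac:(intros a' b' H'; cbv beta; rewrite (proj1 (proj2 (XFvv _ _ H'))); ring)). cln CB21.
  dU L0 U HU (dvV (dvV F)) (N2) (1) lam (b3) u v Huv. rename D into CB22.
  specialize (CB22 ltac:(intros a' b' H'; cbv beta; rewrite (proj2 (proj2 (XFvv _ _ H'))); ring)). cln CB22.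
  rewrite (eta_ext L0 _ _ _ T3a) in G1.
  rewrite (eta_ext L0 _ _ _ T3a) in CA11. rewrite (eta_ext L0 _ _ _ T3a) in CA12.
  rewrite (eta_ext L0 _ _ _ T3b) in CB11. rewrite (eta_ext L0 _ _ _ T3b) in CB12.
  rewrite (eta_ext L0 _ _ _ T3c) in R1.
  assert (dFuu1 : eta L0 (duV (duV F) u v) (duV F u v) / exp (2 * lam u v) = du lam u v) by (rewrite (S1 u v Huv); field; exact (En u v)).
  assert (dFuu2 : eta L0 (duV (duV F) u v) (dvV F u v) / exp (2 * lam u v) = - dv lam u v) by (rewrite (S5 u v Huv); field; exact (En u v)).
  assert (dFuv1 : eta L0 (duV (dvV F) u v) (duV F u v) / exp (2 * lam u v) = dv lam u v) by (rewrite (S2 u v Huv); field; exact (En u v)).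
  assert (dFuv2 : eta L0 (duV (dvV F) u v) (dvV F u v) / exp (2 * lam u v) = - du lam u v) by (rewrite (S3 u v Huv); field; exact (En u v)).
  assert (dFvv1 : eta L0 (dvV (dvV F) u v) (duV F u v) / exp (2 * lam u v) = du lam u v) by (rewrite (S6 u v Huv); field; exact (En u v)).
  assert (dFvv2 : eta L0 (dvV (dvV F) u v) (dvV F u v) / exp (2 * lam u v) = - dv lam u v) by (rewrite (S4 u v Huv); field; exact (En u v)).
  assert (dN1u1 : eta L0 (duV N1 u v) (duV F u v) / exp (2 * lam u v) = - a1 u v) by (rewrite P1; field; exact (En u v)).
  assert (dN1u2 : eta L0 (duV N1 u v) (dvV F u v) / exp (2 * lam u v) = - a2 u v) by (rewrite P2; field; exact (En u v)).
  assert (dN1v1 : eta L0 (dvV N1 u v) (duV F u v) / exp (2 * lam u v) = - a2 u v) by (rewrite P3; field; exact (En u v)).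
  assert (dN1v2 : eta L0 (dvV N1 u v) (dvV F u v) / exp (2 * lam u v) = - a3 u v) by (rewrite P4; field; exact (En u v)).
  pose proof (symf _ _ _ _ (S6 u v Huv)) as zT1Fvv.
  pose proof (symf _ _ _ _ (S4 u v Huv)) as zT2Fvv.
  pose proof (symf _ _ _ _ (proj1 (proj2 (XFvv u v Huv)))) as zN1Fvv.
  pose proof (symf _ _ _ _ (proj2 (proj2 (XFvv u v Huv)))) as zN2Fvv.
  pose proof (symf _ _ _ _ (S2 u v Huv)) as zT1Fuv.
  pose proof (symf _ _ _ _ (S3 u v Huv)) as zT2Fuv.
  pose proof (symf _ _ _ _ (proj1 (proj2 (XFuv u v Huv)))) as zN1Fuv.
  pose proof (symf _ _ _ _ (proj2 (proj2 (XFuv u v Huv)))) as zN2Fuv.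
  pose proof (symf _ _ _ _ P3) as zT1N1v.
  pose proof (symf _ _ _ _ P4) as zT2N1v.
  pose proof (symf _ _ _ _ (proj1 (proj2 (XN1v u v Huv)))) as zN1N1v.
  pose proof (symf _ _ _ _ (proj2 (proj2 (XN1v u v Huv)))) as zN2N1v.
  pose proof (symf _ _ _ _ P1) as zT1N1u.
  pose proof (symf _ _ _ _ P2) as zT2N1u.
  pose proof (symf _ _ _ _ (proj1 (proj2 (XN1u u v Huv)))) as zN1N1u.
  pose proof (symf _ _ _ _ (proj2 (proj2 (XN1u u v Huv)))) as zN2N1u.
  pose proof (symf _ _ _ _ P7) as zT1N2v.
  pose proof (symf _ _ _ _ P8) as zT2N2v.
  pose proof (symf _ _ _ _ P12) as zN2N2v.
  pose proof (symf _ _ _ _ P5) as zT1N2u.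
  pose proof (symf _ _ _ _ P6) as zT2N2u.
  pose proof (symf _ _ _ _ P11) as zN2N2u.
  rewrite (proj1 (XFuu u v Huv) (dvV (dvV F) u v)) in G1.
  rewrite (proj1 (XFuv u v Huv) (duV (dvV F) u v)) in G2.
  rewrite (proj1 (XN1u u v Huv) (dvV N2 u v)) in R1.
  rewrite (proj1 (XN1v u v Huv) (duV N2 u v)) in R2.
  rewrite (proj1 (XFuu u v Huv) (dvV N1 u v)) in CA11.
  rewrite (proj1 (XFuu u v Huv) (dvV N2 u v)) in CA12.
  rewrite (proj1 (XFuv u v Huv) (duV N1 u v)) in CA21.
  rewrite (proj1 (XFuv u v Huv) (duV N2 u v)) in CA22.
  rewrite (proj1 (XFuv u v Huv) (dvV N1 u v)) in CB11.
  rewrite (proj1 (XFuv u v Huv) (dvV N2 u v)) in CB12.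
  rewrite (proj1 (XFvv u v Huv) (duV N1 u v)) in CB21.
  rewrite (proj1 (XFvv u v Huv) (duV N2 u v)) in CB22.
  rewrite ?dFuu1, ?dFuu2, ?dFuv1, ?dFuv2, ?dFvv1, ?dFvv2, ?dN1u1, ?dN1u2, ?dN1v1, ?dN1v2, ?zT1Fvv, ?zT2Fvv, ?zN1Fvv, ?zN2Fvv, ?zT1Fuv, ?zT2Fuv, ?zN1Fuv, ?zN2Fuv, ?zT1N1v, ?zT2N1v, ?zN1N1v, ?zN2N1v, ?zT1N1u, ?zT2N1u, ?zN1N1u, ?zN2N1u, ?zT1N2v, ?zT2N2v, ?zN2N2v, ?zT1N2u, ?zT2N2u, ?zN2N2u, ?P15, ?P16 in G1.
  rewrite ?dFuu1, ?dFuu2, ?dFuv1, ?dFuv2, ?dFvv1, ?dFvv2, ?dN1u1, ?dN1u2, ?dN1v1, ?dN1v2, ?zT1Fvv, ?zT2Fvv, ?zN1Fvv, ?zN2Fvv, ?zT1Fuv, ?zT2Fuv, ?zN1Fuv, ?zN2Fuv, ?zT1N1v, ?zT2N1v, ?zN1N1v, ?zN2N1v, ?zT1N1u, ?zT2N1u, ?zN1N1u, ?zN2N1u, ?zT1N2v, ?zT2N2v, ?zN2N2v, ?zT1N2u, ?zT2N2u, ?zN2N2u, ?P15, ?P16 in G2.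
  rewrite ?dFuu1, ?dFuu2, ?dFuv1, ?dFuv2, ?dFvv1, ?dFvv2, ?dN1u1, ?dN1u2, ?dN1v1, ?dN1v2, ?zT1Fvv, ?zT2Fvv, ?zN1Fvv, ?zN2Fvv, ?zT1Fuv, ?zT2Fuv, ?zN1Fuv, ?zN2Fuv, ?zT1N1v, ?zT2N1v, ?zN1N1v, ?zN2N1v, ?zT1N1u, ?zT2N1u, ?zN1N1u, ?zN2N1u, ?zT1N2v, ?zT2N2v, ?zN2N2v, ?zT1N2u, ?zT2N2u, ?zN2N2u, ?P15, ?P16 in R1.
  rewrite ?dFuu1, ?dFuu2, ?dFuv1, ?dFuv2, ?dFvv1, ?dFvv2, ?dN1u1, ?dN1u2, ?dN1v1, ?dN1v2, ?zT1Fvv, ?zT2Fvv, ?zN1Fvv, ?zN2Fvv, ?zT1Fuv, ?zT2Fuv, ?zN1Fuv, ?zN2Fuv, ?zT1N1v, ?zT2N1v, ?zN1N1v, ?zN2N1v, ?zT1N1u, ?zT2N1u, ?zN1N1u, ?zN2N1u, ?zT1N2v, ?zT2N2v, ?zN2N2v, ?zT1N2u, ?zT2N2u, ?zN2N2u, ?P15, ?P16 in R2.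
  rewrite ?dFuu1, ?dFuu2, ?dFuv1, ?dFuv2, ?dFvv1, ?dFvv2, ?dN1u1, ?dN1u2, ?dN1v1, ?dN1v2, ?zT1Fvv, ?zT2Fvv, ?zN1Fvv, ?zN2Fvv, ?zT1Fuv, ?zT2Fuv, ?zN1Fuv, ?zN2Fuv, ?zT1N1v, ?zT2N1v, ?zN1N1v, ?zN2N1v, ?zT1N1u, ?zT2N1u, ?zN1N1u, ?zN2N1u, ?zT1N2v, ?zT2N2v, ?zN2N2v, ?zT1N2u, ?zT2N2u, ?zN2N2u, ?P15, ?P16 in CA11.
  rewrite ?dFuu1, ?dFuu2, ?dFuv1, ?dFuv2, ?dFvv1, ?dFvv2, ?dN1u1, ?dN1u2, ?dN1v1, ?dN1v2, ?zT1Fvv, ?zT2Fvv, ?zN1Fvv, ?zN2Fvv, ?zT1Fuv, ?zT2Fuv, ?zN1Fuv, ?zN2Fuv, ?zT1N1v, ?zT2N1v, ?zN1N1v, ?zN2N1v, ?zT1N1u, ?zT2N1u, ?zN1N1u, ?zN2N1u, ?zT1N2v, ?zT2N2v, ?zN2N2v, ?zT1N2u, ?zT2N2u, ?zN2N2u, ?P15, ?P16 in CA12.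
  rewrite ?dFuu1, ?dFuu2, ?dFuv1, ?dFuv2, ?dFvv1, ?dFvv2, ?dN1u1, ?dN1u2, ?dN1v1, ?dN1v2, ?zT1Fvv, ?zT2Fvv, ?zN1Fvv, ?zN2Fvv, ?zT1Fuv, ?zT2Fuv, ?zN1Fuv, ?zN2Fuv, ?zT1N1v, ?zT2N1v, ?zN1N1v, ?zN2N1v, ?zT1N1u, ?zT2N1u, ?zN1N1u, ?zN2N1u, ?zT1N2v, ?zT2N2v, ?zN2N2v, ?zT1N2u, ?zT2N2u, ?zN2N2u, ?P15, ?P16 in CA21.
  rewrite ?dFuu1, ?dFuu2, ?dFuv1, ?dFuv2, ?dFvv1, ?dFvv2, ?dN1u1, ?dN1u2, ?dN1v1, ?dN1v2, ?zT1Fvv, ?zT2Fvv, ?zN1Fvv, ?zN2Fvv, ?zT1Fuv, ?zT2Fuv, ?zN1Fuv, ?zN2Fuv, ?zT1N1v, ?zT2N1v, ?zN1N1v, ?zN2N1v, ?zT1N1u, ?zT2N1u, ?zN1N1u, ?zN2N1u, ?zT1N2v, ?zT2N2v, ?zN2N2v, ?zT1N2u, ?zT2N2u, ?zN2N2u, ?P15, ?P16 in CA22.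
  rewrite ?dFuu1, ?dFuu2, ?dFuv1, ?dFuv2, ?dFvv1, ?dFvv2, ?dN1u1, ?dN1u2, ?dN1v1, ?dN1v2, ?zT1Fvv, ?zT2Fvv, ?zN1Fvv, ?zN2Fvv, ?zT1Fuv, ?zT2Fuv, ?zN1Fuv, ?zN2Fuv, ?zT1N1v, ?zT2N1v, ?zN1N1v, ?zN2N1v, ?zT1N1u, ?zT2N1u, ?zN1N1u, ?zN2N1u, ?zT1N2v, ?zT2N2v, ?zN2N2v, ?zT1N2u, ?zT2N2u, ?zN2N2u, ?P15, ?P16 in CB11.
  rewrite ?dFuu1, ?dFuu2, ?dFuv1, ?dFuv2, ?dFvv1, ?dFvv2, ?dN1u1, ?dN1u2, ?dN1v1, ?dN1v2, ?zT1Fvv, ?zT2Fvv, ?zN1Fvv, ?zN2Fvv, ?zT1Fuv, ?zT2Fuv, ?zN1Fuv, ?zN2Fuv, ?zT1N1v, ?zT2N1v, ?zN1N1v, ?zN2N1v, ?zT1N1u, ?zT2N1u, ?zN1N1u, ?zN2N1u, ?zT1N2v, ?zT2N2v, ?zN2N2v, ?zT1N2u, ?zT2N2u, ?zN2N2u, ?P15, ?P16 in CB12.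
  rewrite ?dFuu1, ?dFuu2, ?dFuv1, ?dFuv2, ?dFvv1, ?dFvv2, ?dN1u1, ?dN1u2, ?dN1v1, ?dN1v2, ?zT1Fvv, ?zT2Fvv, ?zN1Fvv, ?zN2Fvv, ?zT1Fuv, ?zT2Fuv, ?zN1Fuv, ?zN2Fuv, ?zT1N1v, ?zT2N1v, ?zN1N1v, ?zN2N1v, ?zT1N1u, ?zT2N1u, ?zN1N1u, ?zN2N1u, ?zT1N2v, ?zT2N2v, ?zN2N2v, ?zT1N2u, ?zT2N2u, ?zN2N2u, ?P15, ?P16 in CB21.
  rewrite ?dFuu1, ?dFuu2, ?dFuv1, ?dFuv2, ?dFvv1, ?dFvv2, ?dN1u1, ?dN1u2, ?dN1v1, ?dN1v2, ?zT1Fvv, ?zT2Fvv, ?zN1Fvv, ?zN2Fvv, ?zT1Fuv, ?zT2Fuv, ?zN1Fuv, ?zN2Fuv, ?zT1N1v, ?zT2N1v, ?zN1N1v, ?zN2N1v, ?zT1N1u, ?zT2N1u, ?zN1N1u, ?zN2N1u, ?zT1N2v, ?zT2N2v, ?zN2N2v, ?zT1N2u, ?zT2N2u, ?zN2N2u, ?P15, ?P16 in CB22.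
  assert (KG : L0 * eta L0 (duV (duV F) u v) (F u v) * eta L0 (F u v) (dvV (dvV F) u v) = - L0 * exp (2 * lam u v) * exp (2 * lam u v)).
  { destruct (Req_dec L0 0) as [z|nz]; [rewrite z; ring|]. rewrite (ZF3 nz), (symf _ _ _ _ (ZF1 nz)); ring. }
  assert (KK : forall w z, (L0 <> 0 -> eta L0 (F u v) z = 0) -> L0 * eta L0 w (F u v) * eta L0 (F u v) z = 0).
  { intros w z Hz. destruct (Req_dec L0 0) as [z0|nz]; [rewrite z0; ring | rewrite (Hz nz); ring]. }
  rewrite KG in G1.
  rewrite KK in G2 by exact ZF2.
  rewrite KK in R1 by exact ZN2v.
  rewrite KK in R2 by exact ZN2u.
  rewrite KK in CA11 by exact ZN1v.
  rewrite KK in CA12 by exact ZN2v.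
  rewrite KK in CA21 by exact ZN1u.
  rewrite KK in CA22 by exact ZN2u.
  rewrite KK in CB11 by exact ZN1v.
  rewrite KK in CB12 by exact ZN2v.
  rewrite KK in CB21 by exact ZN1u.
  rewrite KK in CB22 by exact ZN2u.
  pose proof (En u v) as Eu.
  pose proof (exp_pos (2 * lam u v)) as Ep.
  split; [|split; [|split; [|split]]]; apply injective_projections; unfold W, X, Y, Z, phi, psi, mkC, duC, dvC; simpl.
  all: try lra.
  all: rewrite ?du_opp, ?dv_opp.
  all: change (fun a b : R => du lam a b) with (du lam); change (fun a b : R => dv lam a b) with (dv lam).
  all: change (fun a b : R => a1 a b) with a1; change (fun a b : R => a2 a b) with a2; change (fun a b : R => a3 a b) with a3.
  all: change (fun a b : R => b1 a b) with b1; change (fun a b : R => b2 a b) with b2; change (fun a b : R => b3 a b) with b3.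
  all: change (fun a b : R => mu1 a b) with mu1; change (fun a b : R => mu2 a b) with mu2.
  all: apply (Rmult_eq_reg_l (exp (2 * lam u v))); [|exact Eu].
  all: lra.
Qed.
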